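(* For every $x>0$, $$\frac{L(x,1)^2-G(x,1)^2}{2L(x,1)^2}\le \frac{A(x,1)-L(x,1)}{L(x,1)}\le \log K(x).$$
   Context: $A(x,1)=\frac{x+1}{2}$, $G(x,1)=\sqrt{x}$, $L(x,1)=\frac{x-1}{\log x}$ for $x\ne1$ and $L(1,1)=1$, and $K(x)=\frac{(x+1)^2}{4x}$. *)

(* Defs.v *)
From Stdlib Require Import Reals.
Open Scope R_scope.

Definition Amean (x : R) : R := (x + 1) / 2.
Definition Gmean (x : R) : R := sqrt x.
Definition Lmean (x : R) : R :=
  if Req_EM_T x 1 then 1 else (x - 1) / ln x.
Definition Kfun (x : R) : R := (x + 1) ^ 2 / (4 * x).

(* Main.v *)
Require Import Defs.
From Stdlib Require Import Reals Lra Psatz.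
From Coquelicot Require Import Coquelicot.


Lemma mono (f f' : R -> R) a b : a < b ->
  (forall c, a <= c <= b -> is_derive f c (f' c)) ->
  (forall c, a < c < b -> 0 <= f' c) -> f a <= f b.
Proof.
  intros hab hd hp.
  destruct (MVT_cor2 f f' a b hab) as [c [e hc]].
  - intros c hc; apply is_derive_Reals; auto.
  - specialize (hp c hc). nra.
Qed.

Lemma core1 t : 1 < t -> 2 * (t - 1) / (t + 1) <= ln t.
Proof.
  intro ht.
  assert (H := mono (fun t => ln t - 2 * (t - 1) / (t + 1))
     (fun t => 1/t - 4/(t+1)^2) 1 t ht).
  cbv beta in H; rewrite ln_1 in H.
  assert (0 <= ln t - 2 * (t - 1) / (t + 1)); [|lra].
  replace 0 with (0 - 2 * (1 - 1) / (1 + 1)) by field.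
  apply H.
  - intros c hc. auto_derive. lra. field. lra.
  - intros c hc. cbv beta; replace (1 / c - 4 / (c + 1) ^ 2) with ((c-1)^2/(c*(c+1)^2)) by (field; lra).
    apply Rdiv_le_0_compat. nra. apply Rmult_lt_0_compat; nra.
Qed.

Definition F x := 2*(x-1)*(2*ln(x+1) - ln 4 - ln x + 1) - (x+1) * ln x.
Definition F1 x := 2*(2*ln(x+1) - ln 4 - ln x + 1) + 2*(x-1)*(2/(x+1) - 1/x) - ln x - (x+1)/x.
Definition F2 x := (x-1)*(x^2+6*x+1)/(x^2*(x+1)^2).

Lemma F1pos x : 1 < x -> 0 <= F1 x.
Proof.
  intro hx.
  assert (F1 1 = 0).
  { unfold F1. replace (1+1) with 2 by lra. rewrite ln_1.
    replace 4 with (2*2) by lra. rewrite ln_mult by lra. field. }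
  rewrite <- H. apply (mono F1 F2 1 x hx).
  - intros c hc. unfold F1, F2. auto_derive. repeat split; lra.
    field. lra.
  - intros c hc. unfold F2. apply Rdiv_le_0_compat. nra.
    apply Rmult_lt_0_compat; nra.
Qed.

Lemma Fpos x : 1 < x -> 0 <= F x.
Proof.
  intro hx.
  assert (F 1 = 0). { unfold F. rewrite ln_1. ring. }
  rewrite <- H. apply (mono F F1 1 x hx).
  - intros c hc. unfold F, F1. auto_derive. repeat split; lra.
    field. lra.
  - intros c hc. apply F1pos; lra.
Qed.
Open Scope R_scope.

Lemma Lbound x : 0 < x -> x <> 1 ->
  (x - 1) / ln x <= ((x+1)/2 + sqrt x) / 2.
Proof.
  intros hx h1.
  set (t := sqrt x).
  assert (ht : 0 < t) by (apply sqrt_lt_R0; lra).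
  assert (hxt : x = t * t) by (unfold t; rewrite sqrt_sqrt; lra).
  assert (hl : ln x = 2 * ln t) by (rewrite hxt, ln_mult by lra; ring).
  rewrite hl.
  destruct (Rlt_or_le 1 t) as [h|h].
  - pose proof (core1 t h) as c.
    assert (0 < 2*(t-1)/(t+1)) by (apply Rdiv_lt_0_compat; lra).
    apply Rmult_le_reg_r with (2 * ln t). lra.
    unfold Rdiv at 1. rewrite Rmult_assoc, Rinv_l by lra. rewrite Rmult_1_r.
    assert (2 * (t - 1) / (t + 1) * (t+1) = 2*(t-1)) by (field; lra).
    rewrite hxt. nra.
  - assert (t <> 1) by (intro e; apply h1; rewrite hxt, e; ring).
    assert (t < 1) by lra.
    assert (1 < /t) by (rewrite <- Rinv_1; apply Rinv_lt_contravar; lra).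
    pose proof (core1 (/t) H1) as c. rewrite ln_Rinv in c by lra.
    replace (2 * (/ t - 1) / (/ t + 1)) with (2*(1-t)/(1+t)) in c by (field; lra).
    assert (0 < 2*(1-t)/(1+t)) by (apply Rdiv_lt_0_compat; lra).
    replace ((x - 1) / (2 * ln t)) with ((1 - x) / (2 * - ln t)) by (field; lra).
    apply Rmult_le_reg_r with (2 * - ln t). lra.
    unfold Rdiv at 1. rewrite Rmult_assoc, Rinv_l by lra. rewrite Rmult_1_r.
    assert (2 * (1 - t) / (1 + t) * (1+t) = 2*(1-t)) by (field; lra).
    rewrite hxt. nra.
Qed.

Lemma lnK x : 0 < x -> ln (Kfun x) = 2 * ln (x+1) - ln 4 - ln x.
Proof.
  intro hx. unfold Kfun. unfold Rdiv. replace ((x+1)^2) with ((x+1)*(x+1)) by ring.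
  rewrite ln_mult, ln_Rinv, ln_mult, ln_mult; try lra; try nra.
  apply Rinv_0_lt_compat; lra.
Qed.

Theorem lemma3p2 (x : R) (hx : 0 < x) :
  (Lmean x ^ 2 - Gmean x ^ 2) / (2 * Lmean x ^ 2)
    <= (Amean x - Lmean x) / Lmean x
  /\ (Amean x - Lmean x) / Lmean x <= ln (Kfun x).
Proof.
  unfold Lmean. destruct (Req_EM_T x 1) as [e|ne].
  - subst. unfold Gmean, Amean, Kfun. rewrite sqrt_1.
    replace ((1 + 1) ^ 2 / (4 * 1)) with 1 by field. rewrite ln_1. split; lra.
  - set (l := ln x).
    assert (hl : l <> 0).
    { intro e. apply ne. unfold l in e. rewrite <- (exp_ln x hx), e, exp_0. reflexivity. }
    assert (sg : (x - 1) * l > 0).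
    { destruct (Rlt_or_le x 1) as [h|h].
      - assert (l < 0) by (unfold l; rewrite <- ln_1; apply ln_increasing; lra). nra.
      - assert (0 < l) by (unfold l; rewrite <- ln_1; apply ln_increasing; lra). nra. }
    assert (hL : 0 < (x - 1) / l).
    { replace ((x - 1) / l) with ((x-1)*l / (l*l)) by (field; auto).
      apply Rdiv_lt_0_compat. lra. nra. }
    pose proof (Lbound x hx ne) as LB. fold l in LB.
    set (L := (x - 1) / l) in *.
    unfold Gmean, Amean.
    set (g := sqrt x) in *.
    assert (hg : g * g = x) by (unfold g; apply sqrt_sqrt; lra).
    assert (g0 : 0 <= g) by (unfold g; apply sqrt_pos).
    split.
    + assert (3*L*L - 2*((x+1)/2)*L - g*g <= 0).
      { assert (L * (L - ((x+1)/2 + g)/2) <= 0) by nra.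
        set (A := (x+1)/2) in *.
        assert (hA : 0 <= (A - g)*(A-g)) by apply Rle_0_sqr.
        destruct (Rle_or_lt A (3*g)) as [c|c].
        - assert (L*(3*g-A) <= ((A+g)/2)*(3*g-A)) by (apply Rmult_le_compat_r; lra).
          assert (L*L <= L*((A+g)/2)) by nra.
          assert (((A+g)/2)*(3*g-A) = -(A-g)*(A-g)/2 + 2*(g*g)) by (unfold A; field).
          nra.
        - assert (L*(3*g-A) <= 0) by nra.
          assert (L*L <= L*((A+g)/2)) by nra.
          nra. }
      assert (L <> 0) by lra.
      apply Rminus_le.
      replace ((L ^ 2 - g ^ 2) / (2 * L ^ 2) - ((x + 1) / 2 - L) / L)
        with ((3*L*L - 2*((x+1)/2)*L - g*g) / (2*(L*L))) by (field; auto).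
      assert (0 < / (2*(L*L))) by (apply Rinv_0_lt_compat; nra). unfold Rdiv. nra.
    + rewrite lnK by lra.
      replace (((x + 1) / 2 - L) / L) with ((x+1)*l/(2*(x-1)) - 1)
        by (unfold L; field; split; auto; lra).
      destruct (Rlt_or_le 1 x) as [h|h].
      * pose proof (Fpos x h) as f. unfold F in f. fold l in f.
        apply Rle_trans with ((2*(x-1)*(2*ln(x+1) - ln 4 - l + 1))/(2*(x-1)) - 1).
        -- apply Rplus_le_compat_r. apply Rmult_le_compat_r.
           apply Rlt_le, Rinv_0_lt_compat; lra. lra.
        -- right. unfold l. field. lra.
      * assert (x < 1) by lra.
        assert (hy : 1 < /x) by (rewrite <- Rinv_1; apply Rinv_lt_contravar; lra).
        pose proof (Fpos (/x) hy) as f. unfold F in f.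
        rewrite ln_Rinv in f by lra. fold l in f.
        replace (/x + 1) with ((x+1)/x) in f by (field; lra).
        unfold Rdiv in f. rewrite ln_mult, ln_Rinv in f by (try apply Rinv_0_lt_compat; lra).
        fold l in f.
        set (M := 2 * ln (x + 1) - ln 4 - l) in *.
        replace (2 * (ln (x + 1) + - l) - ln 4 - - l + 1) with (M + 1) in f by (unfold M; ring).
        replace (2 * (/ x - 1) * (M + 1)) with (2*(1-x)*(M+1) / x) in f by (field; lra).
        assert (f2 : -(1+x)*l <= 2*(1-x)*(M+1)).
        { apply Rmult_le_reg_r with (/x). apply Rinv_0_lt_compat; lra. unfold Rdiv in f. lra. }
        apply Rle_trans with ((2*(1-x)*(M+1))/(2*(1-x)) - 1).
        -- replace ((x + 1) * l / (2 * (x - 1))) with (-(1+x)*l/(2*(1-x))) by (field; lra).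
           apply Rplus_le_compat_r. apply Rmult_le_compat_r.
           apply Rlt_le, Rinv_0_lt_compat; lra. lra.
        -- right. unfold M, l. field. lra.
Qed.
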